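(* Let $r\ge 1$ and let $M=(v_1,\dots,v_n)$ be a finite list (repetitions allowed) of nonzero vectors of $\mathbb{F}_2^r$ that generate $\mathbb{F}_2^r$, and suppose $M$ is generic, i.e. $\sum_{i=1}^n v_i\neq \mathbf{0}$ in $\mathbb{F}_2^r$. Then the number of cyclic factors in the invariant factor decomposition of the Sylow-$2$ subgroup of the sandpile group $K(G(\mathbb{F}_2^r,M))$ (equivalently, $\dim_{\mathbb{F}_2} K(G(\mathbb{F}_2^r,M))\otimes \mathbb{Z}/2\mathbb{Z}$) is $2^{r-1}-1$.
   Context: The Cayley graph $G=G(\mathbb{F}_2^r,M)$ has vertex set $\mathbb{F}_2^r$; its Laplacian $L(G)$ is the $2^r\times 2^r$ integer matrix indexed by $\mathbb{F}_2^r$ with $L(G)_{u,u}=n$ and $L(G)_{u,w}=-\#\{i: u+v_i=w\}$ for $u\neq w$. Since $M$ generates, $G$ is connected and $\operatorname{coker}(L(G):\mathbb{Z}^{2^r}\to\mathbb{Z}^{2^r})\cong \mathbb{Z}\oplus K(G)$ with $K(G)$ a finite abelian group, called the sandpile group of $G$. *)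

(* Defs.v *)
From HB Require Import structures.
From mathcomp Require Import all_boot all_order all_algebra all_fingroup.
Set Implicit Arguments. Unset Strict Implicit. Unset Printing Implicit Defensive.
Import Order.TTheory GRing.Theory Num.Theory.
Local Open Scope ring_scope.

Notation vtx r := ('rV['F_2]_r) (only parsing).

Definition cayley_lap (r n : nat) (v : 'I_n -> 'rV['F_2]_r)
  (u w : 'rV['F_2]_r) : int :=
  if u == w then (n%:Z)%R else - (#|[set i : 'I_n | u + v i == w]|%:Z)%R.

Definition cayley_lapmx (r n : nat) (v : 'I_n -> 'rV['F_2]_r)
  : 'M[int]_#|{: 'rV['F_2]_r}| :=
  \matrix_(a, b) cayley_lap v (enum_val a) (enum_val b).

Definition generates (r n : nat) (v : 'I_n -> 'rV['F_2]_r) : bool :=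
  row_full (\matrix_(i < n) v i).

(* Main.v *)
Require Import Defs.
From HB Require Import structures.
From mathcomp Require Import all_boot all_order all_algebra all_fingroup.
From mathcomp Require Import zify.
Import Order.TTheory GRing.Theory Num.Theory.
Local Open Scope ring_scope.

Lemma rank_diag (F : fieldType) (N : nat) (d : 'rV[F]_N) :
  \rank (diag_mx d) = (\sum_(i < N) (d ord0 i != 0%R))%N.
Proof.
elim: N d => [|N IH] d.
  by rewrite big_ord0 flatmx0 mxrank0.
pose d' : 'M_(1, 1 + N) := d.
rewrite -[diag_mx d]/(diag_mx d') -(hsubmxK d') diag_mx_row.
have -> := rank_diag_block_mx (diag_mx (lsubmx d')) (diag_mx (rsubmx d')).
rewrite IH big_ord_recl.
congr (_ + _)%N.
  rewrite [diag_mx _](_ : _ = (lsubmx d' 0 0)%:M); last first.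
    by apply/matrixP => i j; rewrite !ord1 !mxE.
  rewrite mxE.
  have -> : lshift N (ord0 : 'I_1) = ord0 by apply/val_inj.
  case: eqP => [->|/eqP nz]; first by rewrite raddf0 mxrank0.
  by rewrite mxrank_unit // unitmxE det_scalar1 unitfE.
apply: eq_bigr => i _; rewrite !mxE.
have -> : rshift 1 i = lift ord0 i by apply/val_inj.
by [].
Qed.

Lemma smith_rank (F : fieldType) N (L P Q : 'M[int]_N) (d : seq int) :
  P \in unitmx -> Q \in unitmx ->
  L = P *m (\matrix_(i, j) (d`_i *+ (i == j :> nat))) *m Q ->
  \rank (map_mx (fun z : int => z%:~R : F) L) = (\sum_(i < N) ((d`_i)%:~R != 0%R :> F))%N.
Proof.
move=> uP uQ ->.
have mapU (M : 'M[int]_N) : M \in unitmx -> map_mx (fun z : int => z%:~R : F) M \in unitmx.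
  by move=> uM; rewrite unitmxE det_map_mx rmorph_unit // -unitmxE.
rewrite !map_mxM mxrankMfree ?row_free_unit ?mapU //.
rewrite eqmxMfull ?row_full_unit ?mapU //.
rewrite (_ : map_mx _ _ = diag_mx (\row_i ((d`_i)%:~R : F))); last first.
  apply/matrixP => i j; rewrite !mxE rmorphMn /=.
  by [].
by rewrite rank_diag; apply: eq_bigr => i _; rewrite mxE.
Qed.

Lemma F2_cases (x : 'F_2) : x = 0 \/ x = 1.
Proof. case: x => [[|[|k]] Hk]; [left|right|]; try exact/val_inj. by []. Qed.

Lemma F2_addxx (x : 'F_2) : x + x = 0.
Proof. by apply: addrr_pchar2; apply: pchar_Fp. Qed.

Lemma rV_addxx r (u : 'rV['F_2]_r) : u + u = 0.
Proof. by apply/rowP => k; rewrite !mxE F2_addxx. Qed.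

Lemma mF2_addxx m k (u : 'M['F_2]_(m, k)) : u + u = 0.
Proof. by apply/matrixP => i j; rewrite !mxE F2_addxx. Qed.

Lemma shift_eq r (a b u : 'rV['F_2]_r) : (a + u == b) = (a == b + u).
Proof.
apply/eqP/eqP => [<-|->]; by rewrite -addrA rV_addxx addr0.
Qed.

Definition Tm (R : pzRingType) (r : nat) (u : 'rV['F_2]_r) : 'M[R]_#|{: 'rV['F_2]_r}| :=
  \matrix_(a, b) ((enum_val a + u == enum_val b)%:R).
Arguments Tm R {r} u.

Lemma mulTm (R : pzRingType) r (u w : 'rV['F_2]_r) :
  Tm R u *m Tm R w = Tm R (u + w).
Proof.
apply/matrixP => a b; rewrite !mxE (bigD1 (enum_rank (enum_val a + u))) //=.
rewrite !mxE enum_rankK eqxx mul1r addrA big1 ?addr0 // => c Hc.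
rewrite !mxE; case: eqP => [Ec|]; last by rewrite mul0r.
by move: Hc; rewrite Ec enum_valK eqxx.
Qed.

Lemma Tm0 (R : pzRingType) r : Tm R (0 : 'rV['F_2]_r) = 1%:M.
Proof.
apply/matrixP => a b; rewrite !mxE addr0 (inj_eq enum_val_inj).
by case: eqP.
Qed.

Lemma rowTm (R : pzRingType) r (x : 'rV[R]_#|{: 'rV['F_2]_r}|) u b :
  (x *m Tm R u) 0 b = x 0 (enum_rank (enum_val b + u)).
Proof.
rewrite !mxE (bigD1 (enum_rank (enum_val b + u))) //=.
rewrite !mxE enum_rankK shift_eq eqxx mulr1 big1 ?addr0 // => c Hc.
rewrite !mxE shift_eq; case: eqP => [Ec|]; last by rewrite mulr0.
by move: Hc; rewrite -Ec enum_valK eqxx.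
Qed.

Lemma lap_eq (R : pzRingType) r n (v : 'I_n -> 'rV['F_2]_r) :
  (forall i, v i != 0) ->
  map_mx (fun z : int => z%:~R : R) (cayley_lapmx v) = \sum_i (1%:M - Tm R (v i)).
Proof.
move=> nz; apply/matrixP => a b; rewrite !mxE summxE /cayley_lap.
under eq_bigr do rewrite !mxE.
case: eqP => [Eab|Nab].
  have -> : a = b by apply: enum_val_inj.
  rewrite eqxx -pmulrn.
  have H i : (enum_val b + v i == enum_val b) = false.
    by rewrite -[X in _ == X]addr0 (inj_eq (@addrI _ _)) (negbTE (nz i)).
  under eq_bigr => i _ do rewrite H subr0.
  by rewrite -natr_sum sum1_card card_ord.
have -> : (a == b) = false by apply/negbTE/eqP => E; apply: Nab; rewrite E.
rewrite rmorphN /= -pmulrn sumrB big1 // sub0r; congr (- _).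
rewrite -natr_sum; congr (_%:R).
rewrite -sum1_card big_mkcond /=; apply: eq_bigr => i _; rewrite inE.
by case: (_ == _).
Qed.

Lemma sq_sum N (I : Type) (s : seq I) (P : pred I) (X : I -> 'M['F_2]_N) :
  (forall i j, X i *m X j = X j *m X i) ->
  (\sum_(i <- s | P i) X i) *m (\sum_(i <- s | P i) X i) = \sum_(i <- s | P i) (X i *m X i).
Proof.
move=> C; elim: s => [|i s IH]; first by rewrite !big_nil mul0mx.
rewrite !big_cons; case: (P i) => //.
rewrite mulmxDl !mulmxDr IH.
have -> : (\sum_(j <- s | P j) X j) *m X i = X i *m (\sum_(j <- s | P j) X j).
  by rewrite mulmx_suml mulmx_sumr; apply: eq_bigr => j _; rewrite C.
by rewrite addrA -(addrA (X i *m X i)) mF2_addxx addr0.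
Qed.

Lemma A_sq r n (v : 'I_n -> 'rV['F_2]_r) :
  let A := \sum_i (1%:M - Tm 'F_2 (v i)) in A *m A = 0.
Proof.
move=> A; rewrite /A sq_sum.
  apply: big1 => i _.
  rewrite mulmxBl !mulmxBr mulTm rV_addxx Tm0 mulmx1 mul1mx.
  by rewrite mulmx1 opprB mF2_addxx.
move=> i j; rewrite !mulmxBl !mulmxBr !mulTm !mulmx1 !mul1mx [v j + v i]addrC.
by rewrite !opprB !addrA addrAC [in RHS]addrAC; congr (_ + _); apply: addrAC.
Qed.

Definition phi r (j : 'I_r) (u : 'rV['F_2]_r) : bool := u 0 j == 1.
Arguments phi {r} j u.

Definition Dm r (j : 'I_r) : 'M['F_2]_#|{: 'rV['F_2]_r}| :=
  diag_mx (\row_(a < #|{: 'rV['F_2]_r}|) (((enum_val a : 'rV['F_2]_r) 0 j == 1)%:R)).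
Arguments Dm {r} j.

Lemma mxBE (R : zmodType) m k (A B : 'M[R]_(m, k)) i l : (A - B) i l = A i l - B i l.
Proof. by rewrite !mxE. Qed.

Lemma kern_lemma r n (v : 'I_n -> 'rV['F_2]_r) (j : 'I_r) :
  (\sum_i v i) 0 j != 0 ->
  forall x : 'rV['F_2]_#|{: 'rV['F_2]_r}|,
  x *m (\sum_i (1%:M - Tm 'F_2 (v i))) = 0 ->
  x *m Dm j = 0 -> x = 0.
Proof.
move=> Hj x hxA hxD.
have hx0 (a : 'I_#|{: 'rV['F_2]_r}|) : (enum_val a : 'rV['F_2]_r) 0 j = 1 -> x 0 a = 0.
  move=> Ha; have /rowP/(_ a) := hxD.
  by rewrite /Dm mul_mx_diag !mxE Ha eqxx mulr1.
set B := \sum_(i | v i 0 j == 1) Tm 'F_2 (v i).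
have hB : B *m B = 1%:M.
  rewrite /B sq_sum; last by move=> i k; rewrite !mulTm addrC.
  under eq_bigr do rewrite mulTm rV_addxx Tm0.
  rewrite -raddf_sum /=; congr (_%:M).
  have E1 : (\sum_i v i) 0 j = 1 by case: (F2_cases ((\sum_i v i) 0 j)) Hj => ->; rewrite ?eqxx.
  rewrite -[RHS]E1 summxE [RHS](bigID (fun i => v i 0 j == 1)) /=.
  rewrite [X in _ = _ + X]big1 ?addr0; last first.
    by move=> i; case: (F2_cases (v i 0 j)) => ->.
  by apply: eq_bigr => i /eqP ->.
have hxB : x *m B = 0.
  apply/rowP => b; rewrite mulmx_sumr summxE [RHS]mxE.
  under eq_bigr do rewrite rowTm.
  case: (F2_cases ((enum_val b : 'rV['F_2]_r) 0 j)) => Hb.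
    apply: big1 => i /eqP Hi; apply: hx0.
    by rewrite enum_rankK mxE Hb Hi add0r.
  have /rowP/(_ b) := hxA.
  rewrite mulmx_sumr summxE mxE.
  rewrite (eq_bigr (fun k => - x 0 (enum_rank (enum_val b + v k)))); last first.
    by move=> k _; rewrite mulmxBr mulmx1 mxBE rowTm (hx0 b Hb) sub0r.
  rewrite sumrN (bigID (fun i => v i 0 j == 1)) /=.
  rewrite [X in - (_ + X) = _ -> _]big1 ?addr0; first by move/eqP; rewrite oppr_eq0 => /eqP.
  move=> i Hi; apply: hx0; rewrite enum_rankK mxE Hb.
  by case: (F2_cases (v i 0 j)) Hi => ->; rewrite ?eqxx // addr0.
by rewrite -[x]mulmx1 -hB mulmxA hxB mul0mx.
Qed.

Lemma count_half r (j : 'I_r) :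
  (2 * \sum_(a < #|{: 'rV['F_2]_r}|) phi j (enum_val a) = #|{: 'rV['F_2]_r}|)%N.
Proof.
set N := #|{: 'rV['F_2]_r}|.
set e : 'rV['F_2]_r := delta_mx 0 j.
pose f (a : 'I_N) : 'I_N := enum_rank (enum_val a + e).
have finj : injective f.
  by move=> a b /enum_rank_inj /addIr /enum_val_inj.
have E : (\sum_(a < N) phi j (enum_val a) =
          \sum_(a < N) ~~ phi j (enum_val a))%N.
  rewrite (reindex_inj finj) /=; apply: eq_bigr => a _.
  rewrite /f /phi enum_rankK !mxE eqxx /=.
  by rewrite eqxx; case: (F2_cases ((enum_val a : 'rV['F_2]_r) 0 j)) => ->.
have T : (\sum_(a < N) phi j (enum_val a) +
          \sum_(a < N) ~~ phi j (enum_val a) = N)%N.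
  rewrite -big_split /= -[X in _ = X]card_ord -sum1_card; apply: eq_bigr => a _.
  by rewrite /phi; case: (F2_cases ((enum_val a : 'rV['F_2]_r) 0 j)) => ->.
by rewrite mul2n -addnn {2}E.
Qed.

Lemma F2_natr_neq0 (b : bool) : ((b%:R : 'F_2) != 0) = b.
Proof. by case: b; rewrite ?oner_eq0 ?eqxx. Qed.

Lemma rank_F2 r n (v : 'I_n -> 'rV['F_2]_r) :
  \sum_i v i != 0 ->
  (2 * \rank (\sum_i (1%:M - Tm 'F_2 (v i)))%R = #|{: 'rV['F_2]_r}|)%N.
Proof.
move=> Hs.
set A := \sum_i (1%:M - Tm 'F_2 (v i)).
set N := #|{: 'rV['F_2]_r}|.
have [j Hj] : exists j, (\sum_i v i) 0 j != 0.
  case: (pickP (fun j => (\sum_i v i) 0 j != 0)) => [j Hj|H]; first by exists j.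
  by case/eqP: Hs; apply/rowP => j; move/negbFE/eqP: (H j) => ->; rewrite mxE.
have up : (\rank A <= N - \rank A)%N.
  have H := mxrank_mul_ker A A; rewrite A_sq mxrank0 add0n in H.
  by rewrite -{1}H -mxrank_ker mxrankS // capmxSr.
have low : (N - \rank A <= \sum_(a < N) phi j (enum_val a))%N.
  rewrite -mxrank_ker -(mxrank_mul_ker (kermx A) (Dm j)).
  have -> : \rank (kermx A :&: kermx (Dm j)) = 0%N.
    apply/eqP; rewrite mxrank_eq0; apply/rowV0P => y.
    rewrite sub_capmx => /andP[/sub_kermxP yA /sub_kermxP yD].
    exact: kern_lemma Hj y yA yD.
  rewrite addn0; apply: leq_trans (mxrankM_maxr _ _) _.
  rewrite /Dm rank_diag; apply: eq_leq; apply: eq_bigr => a _.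
  by rewrite mxE /phi F2_natr_neq0.
have := @count_half r j; have := rank_leq_row A.
rewrite -/N => h1 h2.
have h3 : (2 * (N - \rank A) <= N)%N by rewrite -[X in (_ <= X)%N]h2 leq_mul2l low orbT.
move: up h1 h3; move: (\rank A) => x; clear low h2; clearbody N; lia.
Qed.

Lemma rowL (R : pzRingType) r n (v : 'I_n -> 'rV['F_2]_r) (x : 'rV[R]_#|{: 'rV['F_2]_r}|) b :
  (x *m \sum_i (1%:M - Tm R (v i))) 0 b = \sum_i (x 0 b - x 0 (enum_rank (enum_val b + v i))).
Proof.
rewrite mulmx_sumr summxE; apply: eq_bigr => i _.
by rewrite mulmxBr mulmx1 !mxE -rowTm !mxE.
Qed.

Lemma ker_const r n (v : 'I_n -> 'rV['F_2]_r) :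
  generates v ->
  forall x : 'rV[rat]_#|{: 'rV['F_2]_r}|,
  x *m (\sum_i (1%:M - Tm rat (v i))) = 0 -> exists c, forall a, x 0 a = c.
Proof.
move=> gen x hx.
set a0 : 'I_#|{: 'rV['F_2]_r}| := enum_rank (0 : 'rV['F_2]_r).
case: (@arg_maxP _ _ _ a0 xpredT (fun a => x 0 a) isT) => b0 _ Hmax.
set M := x 0 b0.
have step b : x 0 b = M -> forall i, x 0 (enum_rank (enum_val b + v i)) = M.
  move=> Hb i; have /rowP/(_ b) := hx; rewrite rowL mxE => H0.
  have nn : forall k : 'I_n, true -> 0 <= x 0 b - x 0 (enum_rank (enum_val b + v k)).
    by move=> k _; rewrite subr_ge0 Hb; apply: Hmax.
  have := @psumr_eq0P _ _ _ _ nn H0 i isT.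
  by move/eqP; rewrite subr_eq0 Hb => /eqP.
have clos (s : seq 'I_n) (c : 'I_n -> 'F_2) : forall b, x 0 b = M ->
    x 0 (enum_rank (enum_val b + \sum_(i <- s) c i *: v i)) = M.
  elim: s => [|i s IH] b Hb; first by rewrite big_nil addr0 enum_valK.
  rewrite big_cons addrA.
  have -> : enum_val b + c i *: v i = enum_val (enum_rank (enum_val b + c i *: v i)) by rewrite enum_rankK.
  apply: IH; case: (F2_cases (c i)) => ->; first by rewrite scale0r addr0 enum_valK.
  by rewrite scale1r; apply: step.
exists M => a.
have /submxP[y Hy] : ((enum_val a : 'rV['F_2]_r) - enum_val b0 <= \matrix_(i < n) v i)%MS.
  exact: submx_full.
have Hy' : (enum_val a : 'rV['F_2]_r) - enum_val b0 = \sum_(i <- index_enum 'I_n) y 0 i *: v i.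
  by rewrite Hy mulmx_sum_row; apply: eq_bigr => i _; rewrite rowK.
have := clos (index_enum 'I_n) (fun i => y 0 i) b0 erefl.
by rewrite -Hy' addrC subrK enum_valK.
Qed.

Lemma rank_Q r n (v : 'I_n -> 'rV['F_2]_r) :
  generates v ->
  \rank (\sum_i (1%:M - Tm rat (v i)))%R = (#|{: 'rV['F_2]_r}| - 1)%N.
Proof.
move=> gen.
set L := \sum_i (1%:M - Tm rat (v i)).
set N := #|{: 'rV['F_2]_r}|.
set J : 'rV[rat]_N := const_mx 1.
have JL : J *m L = 0.
  apply/rowP => b; rewrite rowL [RHS]mxE big1 // => i _; rewrite !mxE subrr //.
have a0 : 'I_N := enum_rank (0 : 'rV['F_2]_r).
have rJ : \rank J = 1%N.
  apply/eqP; rewrite eqn_leq rank_leq_row lt0n mxrank_eq0; apply/eqP => /rowP/(_ a0).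
  by rewrite !mxE; apply/eqP; rewrite oner_eq0.
have k1 : (1 <= \rank (kermx L))%N.
  by rewrite -[X in (X <= _)%N]rJ mxrankS //; apply/sub_kermxP.
have k2 : (\rank (kermx L) <= 1)%N.
  rewrite -[X in (_ <= X)%N]rJ mxrankS //; apply/row_subP => k.
  have /sub_kermxP hk := row_sub k (kermx L).
  have [c Hc] := @ker_const r n v gen _ hk.
  have -> : row k (kermx L) = c *: J by apply/rowP => a; rewrite Hc !mxE mulr1.
  exact: scalemx_sub (submx_refl J).
have h1 := mxrank_ker L; have h2 := rank_leq_row L.
rewrite /N in h1 h2 *.
move: h1 h2 k1 k2; move: (\rank (kermx L)) (\rank L) => x y.
lia.
Qed.

Lemma F2_int (z : int) : ((z%:~R : 'F_2) != 0) = ~~ (2 %| z)%Z.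
Proof.
congr negb.
rewrite dvdzE; case: z => k.
  rewrite -pmulrn /= -Fp_nat_mod // /dvdn.
  by case: (k %% 2)%N (ltn_pmod k (isT : (0 < 2)%N)) => [|[|]] //= _; rewrite oner_eq0.

rewrite NegzE mulrNz oppr_eq0 -pmulrn /= -Fp_nat_mod // /dvdn.
by case: (k.+1 %% 2)%N (ltn_pmod k.+1 (isT : (0 < 2)%N)) => [|[|]] //= _; rewrite oner_eq0.
Qed.

Theorem mainTheorem1 (r n : nat) (v : 'I_n -> 'rV['F_2]_r) :
  (1 <= r)%N ->
  (forall i, v i != 0) ->
  generates v ->
  \sum_(i < n) v i != 0 ->
  forall (P Q : 'M[int]_#|{: 'rV['F_2]_r}|) (d : seq int),
    P \in unitmx -> Q \in unitmx -> sorted dvdz d ->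
    cayley_lapmx v = P *m (\matrix_(i, j) (d`_i *+ (i == j :> nat))) *m Q ->
    #|[set i : 'I_#|{: 'rV['F_2]_r}| | (d`_i != 0) && (2 %| d`_i)%Z]| =
      (2 ^ r.-1 - 1)%N.
Proof.
move=> hr nz gen Hs P Q d uP uQ _ HL.
have rQ := @smith_rank rat _ _ _ _ _ uP uQ HL.
rewrite lap_eq // rank_Q // in rQ.
have r2 := @smith_rank 'F_2 _ _ _ _ _ uP uQ HL.
rewrite lap_eq // in r2.
have r2' := @rank_F2 r n v Hs; rewrite r2 in r2'.
have cN : #|{: 'rV['F_2]_r}| = (2 ^ r)%N.
  by rewrite card_mx card_Fp // mul1n.
have e2 : (2 ^ r = 2 * 2 ^ r.-1)%N by rewrite -expnS prednK.
rewrite -sum1_card big_mkcond /=.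
set S := [set i : 'I_#|{: 'rV['F_2]_r}| | (d`_i != 0) && (2 %| d`_i)%Z].
have pt : forall i : 'I_#|{: 'rV['F_2]_r}|, ((d`_i)%:~R != 0 :> rat) =
   addn (if i \in S then 1%N else 0%N) ((d`_i)%:~R != 0 :> 'F_2) :> nat.
  move=> i; rewrite inE F2_int intr_eq0.
  by case: eqP => [->|_] /=; rewrite ?dvdz0 //; case: (2 %| _)%Z.
rewrite (eq_bigr _ (fun i _ => pt i)) big_split /= in rQ.
move: rQ r2'.
move: (\sum_(i < _) (if _ then _ else _))%N => x.
move: (\sum_(i < _) _)%N => y.
rewrite cN e2; lia.
Qed.
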